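(* In the public project problem with equal participation costs, the BC mechanism coincides with the VCG mechanism; equivalently, $S_i^{BCGC}(\theta_{-i})=0$ for all $i$ and all $\theta_{-i}$, where $S_i^{BCGC}(\theta_{-i})=\max_{\theta_i'\in[0,c]}\sum_{k=1}^n t_k^{VCG}(\theta_i',\theta_{-i})$.
   Context: Public project problem (equal participation costs): $n\ge2$ players, decisions $D=\{0,1\}$ (project cancelled/built), $\Theta_i=[0,c]$ with $c>0$, $v_i(d,\theta_i)=d(\theta_i-c/n)$. The efficient decision is $f(\theta)=1$ iff $\sum_i\theta_i\ge c$. Player $i$'s utility is $v_i(f(\theta),\theta_i)+t_i(\theta)$. The VCG (Clarke) mechanism has $t_i^{VCG}(\theta)=\sum_{j\ne i}v_j(f(\theta),\theta_j)-\max_{d\in D}\sum_{j\ne i}v_j(d,\theta_j)$. The BC (Bailey–Cavallo) mechanism is $t_i^{BC}(\theta)=t_i^{VCG}(\theta)-S_i^{BCGC}(\theta_{-i})/n$ with $S_i^{BCGC}(\theta_{-i})=\max_{\theta_i'\in\Theta_i}\sum_{k=1}^n t^{VCG}_k(\theta_i',\theta_{-i})$. *)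

(* Defs.v *)
From HB Require Import structures.
From mathcomp Require Import all_boot all_order all_algebra.
Set Implicit Arguments. Unset Strict Implicit. Unset Printing Implicit Defensive.
Import Order.TTheory GRing.Theory Num.Theory.
Local Open Scope ring_scope.

Section PublicProject.
Variables (R : realFieldType) (n : nat) (c : R).

(* decisions D = {0,1} encoded as bool (false = cancelled, true = built) *)
Definition dval (d : bool) : R := if d then 1 else 0.

Definition v (d : bool) (ti : R) : R := dval d * (ti - c / n%:R).

Definition f (theta : 'I_n -> R) : bool := c <= \sum_(j < n) theta j.

Definition others (i : 'I_n) (d : bool) (theta : 'I_n -> R) : R :=
  \sum_(j < n | j != i) v d (theta j).

Definition tVCG (theta : 'I_n -> R) (i : 'I_n) : R :=
  others i (f theta) theta - Num.max (others i false theta) (others i true theta).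

Definition upd (theta : 'I_n -> R) (i : 'I_n) (x : R) : 'I_n -> R :=
  fun j => if j == i then x else theta j.

Definition total_tVCG (theta : 'I_n -> R) (i : 'I_n) (x : R) : R :=
  \sum_(k < n) tVCG (upd theta i x) k.

Definition is_max_on_0c (g : R -> R) (m : R) : Prop :=
  (exists2 x, 0 <= x <= c & g x = m) /\ (forall x, 0 <= x <= c -> g x <= m).

(* S_i^{BCGC}(theta_{-i}) = s  (the maximum exists and equals s) *)
Definition S_BCGC_is (theta : 'I_n -> R) (i : 'I_n) (s : R) : Prop :=
  is_max_on_0c (total_tVCG theta i) s.

Definition tBC_with (theta : 'I_n -> R) (i : 'I_n) (s : R) : R :=
  tVCG theta i - s / n%:R.

End PublicProject.

(* Main.v *)
Require Import Defs.
From HB Require Import structures.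
From mathcomp Require Import all_boot all_order all_algebra.
Import Order.TTheory GRing.Theory Num.Theory.
Local Open Scope ring_scope.

Section H.
Variables (R : realFieldType) (n : nat) (c : R).

Lemma others_false (th : 'I_n -> R) k : @others R n c k false th = 0.
Proof. by rewrite /others big1 // => j _; rewrite /v /dval mul0r. Qed.

Lemma tVCGE (th : 'I_n -> R) k :
  @tVCG R n c th k = (if @f R n c th then @others R n c k true th else 0)
     - Num.max 0 (@others R n c k true th).
Proof. by rewrite /tVCG others_false; case: (@f R n c th) => //; rewrite others_false. Qed.

Lemma tVCG_le0 (th : 'I_n -> R) k : @tVCG R n c th k <= 0.
Proof.
rewrite tVCGE subr_le0; case: (@f R n c th).
  by rewrite le_max lexx orbT.
by rewrite le_max lexx.
Qed.

Definition Vs (th : 'I_n -> R) := \sum_(j < n) @v R n c true (th j).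

Lemma vtrue x : @v R n c true x = x - c / n%:R.
Proof. by rewrite /v /dval mul1r. Qed.

Lemma fE (th : 'I_n -> R) : (0 < n)%N -> @f R n c th = (0 <= Vs th).
Proof.
move=> n0; rewrite /f /Vs.
rewrite [X in _ = (_ <= X)](eq_bigr (fun j => th j - c / n%:R)); last by move=> j _; rewrite vtrue.
rewrite sumrB sumr_const card_ord -[_ *+ n]mulr_natr mulfVK; first by rewrite subr_ge0.
by rewrite pnatr_eq0 -lt0n.
Qed.

Lemma VsD (th : 'I_n -> R) k : Vs th = (th k - c / n%:R) + @others R n c k true th.
Proof. by rewrite /Vs (bigD1 k) //= vtrue. Qed.

End H.
Arguments Vs {R n} c th.
Arguments VsD {R n c th}.
Arguments fE {R n c th}.

Theorem mainTheorem8 (R : realFieldType) (n : nat) (c : R)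
  (hn : (2 <= n)%N) (hc : 0 < c) (theta : 'I_n -> R)
  (htheta : forall j, 0 <= theta j <= c) (i : 'I_n) :
  @S_BCGC_is R n c theta i 0 /\
  (forall s, @S_BCGC_is R n c theta i s -> @tBC_with R n c theta i s = @tVCG R n c theta i).
Proof.
have n0 : (0 < n)%N by apply: leq_trans hn.
have le0 : forall x, @total_tVCG R n c theta i x <= 0.
  by move=> x; rewrite /total_tVCG; apply: sumr_le0 => k _; apply: tVCG_le0.
have cn0 : 0 <= c / n%:R by rewrite divr_ge0 // ltW.
have cnc : c / n%:R <= c.
  rewrite ler_pdivrMr ?ltr0n // ler_peMr ?ltW // ?ler1n ?ltr1n //.
set oi := @others R n c i true theta.
have oiu : forall x, @others R n c i true (upd theta i x) = oi.
  move=> x; apply: eq_bigr => j ji; by rewrite /upd (negbTE ji).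
have ok : forall x k, k != i -> @others R n c k true (upd theta i x)
    = Vs c (upd theta i x) - (theta k - c / n%:R).
  by move=> x k ki; rewrite (VsD k) /upd (negbTE ki) (addrC (theta k - _)) addrK.
have Vsi : forall x, Vs c (upd theta i x) = x - c / n%:R + oi.
  by move=> x; rewrite (VsD i) oiu /upd eqxx.
have H0 : exists2 x, 0 <= x <= c & @total_tVCG R n c theta i x = 0.
  have [hoi|hoi] := lerP 0 oi.
  - exists c; first by rewrite lexx ltW.
    rewrite /total_tVCG big1 // => k _; rewrite tVCGE.
    have hf : @f R n c (upd theta i c) by rewrite (fE n0) Vsi addr_ge0 ?subr_ge0.
    rewrite hf.
    have hk : 0 <= @others R n c k true (upd theta i c).
      case: (eqVneq k i) => [->|ki]; first by rewrite oiu.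
      rewrite ok // Vsi subr_ge0 lerBlDr addrAC subrK.
      by apply: le_trans (_ : c <= _); [case/andP: (htheta k) | rewrite lerDl].
    by rewrite max_r // subrr.
  - exists 0; first by rewrite lexx ltW.
    rewrite /total_tVCG big1 // => k _; rewrite tVCGE.
    have hf : @f R n c (upd theta i 0) = false.
      by rewrite (fE n0) Vsi; apply/negbTE; rewrite -ltNge sub0r addrC subr_lt0 (lt_le_trans hoi cn0).
    rewrite hf.
    have hk : @others R n c k true (upd theta i 0) <= 0.
      case: (eqVneq k i) => [->|ki]; first by rewrite oiu ltW.
      rewrite ok // Vsi subr_le0 sub0r addrC lerD2r.
      by apply: le_trans (ltW hoi) _; case/andP: (htheta k).
    by rewrite max_l // subrr.
have Hs : forall s, @S_BCGC_is R n c theta i s -> s = 0.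
  move=> s [[x hx <-] hm]; apply/eqP; rewrite eq_le le0 /=.
  by case: H0 => y hy <-; apply: hm.
split; first by split=> // x _; apply: le0.
by move=> s /Hs ->; rewrite /tBC_with mul0r subr0.
Qed.
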